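(* Let $G=(V,E,w)$ be a connected undirected graph with positive edge weights, let $v\in V$, and let $E_v$ be a set of node pairs $\{u,v\}$ with $u\neq v$ and $\{u,v\}\notin E$, each $e\in E_v$ having a given positive weight $w(e)$. For $S\subseteq E_v$ let $\mathcal{R}(S)$ denote the resistance distance of $v$ in the augmented graph $G(S)$. Then $\mathcal{R}$ is supermodular: for any sets $S\subseteq T\subseteq E_v$ and any edge $e\in E_v\setminus T$, $$\mathcal{R}(T)-\mathcal{R}(T\cup\{e\})\le \mathcal{R}(S)-\mathcal{R}(S\cup\{e\}).$$
   Context: For a connected weighted graph $H$ on node set $V$ with $|V|=n$, its Laplacian is $\mathbf{L}=\mathbf{D}-\mathbf{A}$, where $\mathbf{A}$ is the weighted adjacency matrix and $\mathbf{D}$ the diagonal matrix of weighted degrees; $\mathbf{L}^\dagger$ denotes its Moore–Penrose pseudoinverse. For nodes $a,b$ let $\mathbf{b}_{a,b}=\mathbf{e}_a-\mathbf{e}_b$. The resistance distance between $a$ and $b$ is $\mathcal{R}_{ab}=\mathbf{b}_{a,b}^\top\mathbf{L}^\dagger\mathbf{b}_{a,b}$, and the resistance distance of node $v$ is $\mathcal{R}_v=\sum_{u\in V}\mathcal{R}_{uv}$. For $S\subseteq E_v$, $G(S)=(V,E\cup S,w')$ is the graph obtained by adding the edges of $S$ with their given weights. *)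

(* Defs.v *)
From HB Require Import structures.
From mathcomp Require Import all_boot all_order all_algebra.
From Stdlib Require Import ClassicalEpsilon.
Set Implicit Arguments. Unset Strict Implicit. Unset Printing Implicit Defensive.
Import Order.TTheory GRing.Theory Num.Theory.
Local Open Scope ring_scope.

Section GraphDefs.
Variable R : realFieldType.
Variable n : nat.

(* Weighted graph on node set 'I_n given by a symmetric, nonnegative
   weighted adjacency matrix with zero diagonal; {i,j} is an edge iff A i j > 0. *)
Definition edge_rel (A : 'M[R]_n) : rel 'I_n := fun i j => 0 < A i j.

Definition connected_graph (A : 'M[R]_n) : Prop :=
  forall i j : 'I_n, connect (edge_rel A) i j.

Definition laplacian (A : 'M[R]_n) : 'M[R]_n :=
  \matrix_(i, j) ((if i == j then \sum_(k < n) A i k else 0) - A i j).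

(* Moore--Penrose conditions (real case: conjugate transpose = transpose). *)
Definition is_MP_pinv (A X : 'M[R]_n) : Prop :=
  [/\ A *m X *m A = A, X *m A *m X = X,
      (A *m X)^T = A *m X & (X *m A)^T = X *m A].

(* The Moore--Penrose pseudoinverse (unique when it exists). *)
Definition mp_pinv (A : 'M[R]_n) : 'M[R]_n :=
  epsilon (inhabits 0) (fun X => is_MP_pinv A X).

Definition bvec (a b : 'I_n) : 'cV[R]_n :=
  \col_k ((k == a)%:R - (k == b)%:R).

Definition resistance (A : 'M[R]_n) (a b : 'I_n) : R :=
  ((bvec a b)^T *m mp_pinv (laplacian A) *m bvec a b) 0 0.

Definition node_resistance (A : 'M[R]_n) (v : 'I_n) : R :=
  \sum_(u < n) resistance A u v.

(* Augmented graph G(S): each candidate edge {u,v} is identified with its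
   endpoint u != v; u \in S means edge {u,v} with weight c u is added. *)
Definition augment (A : 'M[R]_n) (v : 'I_n) (c : 'I_n -> R) (S : {set 'I_n})
  : 'M[R]_n :=
  \matrix_(i, j) (A i j + (if (i == v) && (j \in S) then c j else 0)
                        + (if (j == v) && (i \in S) then c i else 0)).

End GraphDefs.

(* Main.v *)
Require Import Defs.
From HB Require Import structures.
From Stdlib Require Import ClassicalEpsilon.
From mathcomp Require Import all_boot all_order all_algebra.
From mathcomp Require Import ring lra.
Set Implicit Arguments. Unset Strict Implicit. Unset Printing Implicit Defensive.
Import Order.TTheory GRing.Theory Num.Theory.
Local Open Scope ring_scope.

Section Core.
Variable R : realFieldType.
Variable n : nat.
Implicit Types W G : 'M[R]_n.

Lemma minpr W (v : 'I_n) (B : pred 'I_n) (y : 'I_n -> R) :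
  (forall i j, 0 <= W i j) -> (forall i, connect (edge_rel W) i v) ->
  B v -> (forall b, B b -> 0 <= y b) ->
  (forall a, ~~ B a -> 0 <= \sum_k W a k * (y a - y k)) ->
  forall i, 0 <= y i.
Proof.
move=> W0 conn Bv By Hs i.
case: (@arg_minP _ _ _ v predT y isT) => m _ Hm.
rewrite leNgt; apply/negP => yi0.
have ym0 : y m < 0 by apply: le_lt_trans yi0; exact: Hm.
have step : forall x x', y x = y m -> edge_rel W x x' -> y x' = y m.
  move=> x x' yx ex.
  have nBx : ~~ B x by apply/negP => /By; rewrite yx leNgt ym0.
  have H1 := Hs x nBx.
  have Hle : forall k, 0 <= W x k * (y k - y x).
    by move=> k; apply: mulr_ge0 => //; rewrite subr_ge0 yx; apply: Hm.
  have Hsum : \sum_k W x k * (y k - y x) = 0.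
    apply/eqP; rewrite eq_le sumr_ge0 // andbT.
    rewrite -oppr_ge0 -sumrN (eq_bigr (fun k => W x k * (y x - y k))) //.
    by move=> k _; rewrite -mulrN opprB.
  have := @psumr_eq0P _ _ predT _ (fun k _ => Hle k) Hsum x' isT.
  move/eqP; rewrite mulf_eq0 => /orP[/eqP Wz|].
    by move: ex; rewrite /edge_rel Wz ltxx.
  by rewrite subr_eq0 => /eqP ->.
have : y v = y m.
  case/connectP: (conn m) => p pth ->.
  have : y m = y m by [].
  move: pth; move: {1 2 4}m => z.
  elim: p z => [|x p IH] z pth yz //=.
  by move: pth => /= /andP[ezx pth]; apply: (IH x pth); apply: (step z x).
move=> yv; have := By v Bv; rewrite yv leNgt ym0 //.
Qed.


Lemma lapM W (M : 'M[R]_n) i u :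
  (laplacian W *m M) i u = \sum_k W i k * (M i u - M k u).
Proof.
rewrite !mxE.
under eq_bigr => k _ do rewrite !mxE mulrBl.
rewrite sumrB [X in X - _](bigD1 i) //= eqxx [X in _ + X - _]big1 ?addr0; last first.
  by move=> k; rewrite eq_sym => /negbTE ->; rewrite mul0r.
rewrite mulr_suml -sumrB; apply: eq_bigr => k _; rewrite mulrBr.
done.
Qed.

Lemma lap_sym W : W^T = W -> forall i j, laplacian W i j = laplacian W j i.
Proof.
move=> WT i j; rewrite !mxE eq_sym.
have -> : W j i = W i j by rewrite -{1}WT mxE.
by case: eqP => // ->.
Qed.

Lemma lap_rowsum W i : \sum_k laplacian W i k = 0.
Proof.
rewrite (bigD1 i) //= mxE eqxx.
rewrite [X in _ + X](eq_bigr (fun k => - W i k)); last first.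
  by move=> k /negbTE; rewrite mxE eq_sym => ->; rewrite sub0r.
rewrite sumrN [X in X - _ + _](bigD1 i) //=.
set s := \sum_(k | k != i) W i k; ring.
Qed.

Lemma lap_colsum W : W^T = W -> forall k, \sum_i laplacian W i k = 0.
Proof.
move=> WT k; rewrite (eq_bigr (fun i => laplacian W k i)) ?lap_rowsum //.
by move=> i _; apply: lap_sym.
Qed.

Definition grounded W (v : 'I_n) G :=
  [/\ forall u, G v u = 0, forall i j, G i j = G j i &
      forall i u, (laplacian W *m G) i u = (i == u)%:R - (i == v)%:R].


Lemma gr_nonneg W v G :
  (forall i j, 0 <= W i j) -> (forall i, connect (edge_rel W) i v) ->
  grounded W v G -> forall i j, 0 <= G i j.
Proof.
move=> W0 conn [Gv Gs LG] i j.
apply: (@minpr W v (pred1 v) (fun i => G i j)) => //=.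
  by move=> b /eqP ->; rewrite Gv.
move=> a /negbTE av; rewrite -lapM LG av subr0; exact: ler0n.
Qed.

Lemma gr_pp W v G :
  (forall i j, 0 <= W i j) -> (forall i, connect (edge_rel W) i v) ->
  grounded W v G -> forall i e j, G i e * G e j <= G i j * G e e.
Proof.
move=> W0 conn gr i e j.
have G0 := gr_nonneg W0 conn gr.
case: gr => Gv Gs LG.
rewrite -subr_ge0.
apply: (@minpr W v [pred a | (a == v) || (a == e)]
   (fun i => G i j * G e e - G i e * G e j)) => //=.
- by rewrite eqxx.
- move=> b /orP[/eqP ->|/eqP ->]; first by rewrite !Gv !mul0r subrr.
  by rewrite [G e j * _]mulrC subrr.
move=> a; rewrite negb_or => /andP[/negbTE av /negbTE ae].
have -> : \sum_k W a k * ((G a j * G e e - G a e * G e j) - (G k j * G e e - G k e * G e j))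
  = G e e * \sum_k W a k * (G a j - G k j) - G e j * \sum_k W a k * (G a e - G k e).
  rewrite !mulr_sumr -sumrB; apply: eq_bigr => k _; ring.
rewrite -!lapM !LG av ae !subr0 mulr0 subr0.
apply: mulr_ge0 => //; exact: ler0n.
Qed.


Definition addedge W (v e : 'I_n) (c : R) : 'M[R]_n :=
  \matrix_(i, k) (W i k + (if (i == v) && (k == e) then c else 0)
                        + (if (k == v) && (i == e) then c else 0)).

Lemma sum_if1 (e : 'I_n) (x : R) (F : 'I_n -> R) :
  \sum_k (if k == e then x else 0) * F k = x * F e.
Proof.
rewrite (bigD1 e) //= eqxx big1 ?addr0 // => k /negbTE ->; exact: mul0r.
Qed.

Lemma lapM_add W v e c (M : 'M[R]_n) i u :
  (laplacian (addedge W v e c) *m M) i u =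
  (laplacian W *m M) i u + c * ((i == e)%:R - (i == v)%:R) * (M e u - M v u).
Proof.
rewrite !lapM.
under eq_bigr => k _ do rewrite !mxE !mulrDl.
rewrite !big_split /=.
have -> : \sum_k (if (i == v) && (k == e) then c else 0) * (M i u - M k u)
          = (i == v)%:R * c * (M i u - M e u).
  case: (i == v); last by rewrite big1 ?mul0r // => k _; rewrite mul0r.
  by rewrite sum_if1 mul1r.
have -> : \sum_k (if (k == v) && (i == e) then c else 0) * (M i u - M k u)
          = (i == e)%:R * c * (M i u - M v u).
  under eq_bigr => k _ do rewrite andbC.
  case: (i == e); last by rewrite big1 ?mul0r // => k _; rewrite mul0r.
  by rewrite sum_if1 mul1r.
case: (eqVneq i v) => [->|iv].
  by case: (eqVneq v e) => [<-|ve] /=; ring.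
by case: (eqVneq i e) => [->|ie] /=; ring.
Qed.


Definition upd G (e : 'I_n) (c : R) : 'M[R]_n :=
  \matrix_(i, j) (G i j - c / (1 + c * G e e) * G i e * G e j).

Lemma gr_upd W v G e c : 1 + c * G e e != 0 ->
  grounded W v G -> grounded (addedge W v e c) v (upd G e c).
Proof.
move=> nz [Gv Gs LG]; split.
- by move=> u; rewrite mxE !Gv mulr0 mul0r subr0.
- by move=> i j; rewrite !mxE (Gs i j) (Gs i e) (Gs e j) -!mulrA [G e i * _]mulrC.
move=> i u; rewrite lapM_add.
set k := c / (1 + c * G e e).
have -> : (laplacian W *m upd G e c) i u =
   (laplacian W *m G) i u - k * G e u * (laplacian W *m G) i e.
  rewrite !lapM mulr_sumr -sumrB; apply: eq_bigr => l _; rewrite !mxE -/k; ring.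
rewrite !LG !mxE !Gv -/k.
have hk : k * (1 + c * G e e) = c by rewrite /k divfK.
apply/eqP; rewrite -subr_eq0; apply/eqP.
transitivity (((i == e)%:R - (i == v)%:R) * G e u * (c - k * (1 + c * G e e))); first ring.
by rewrite hk subrr mulr0.
Qed.


Lemma tr_upd G e c :
  \tr (upd G e c) = \tr G - c / (1 + c * G e e) * \sum_i G i e * G e i.
Proof.
rewrite /mxtrace mulr_sumr -sumrB; apply: eq_bigr => i _; rewrite mxE; ring.
Qed.

Lemma res_formula W v G : W^T = W -> grounded W v G ->
  node_resistance W v = \tr G.
Proof.
move=> WT gr; have [Gv Gs LG] := gr.
set L := laplacian W.
have LT : L^T = L by apply/matrixP => i j; rewrite mxE; apply: lap_sym.
have GT : G^T = G by apply/matrixP => i j; rewrite mxE.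
pose ev : 'cV[R]_n := delta_mx v 0.
pose one : 'cV[R]_n := const_mx 1.
have F1 : L *m G = 1%:M - ev *m one^T.
  apply/matrixP => i u; rewrite LG !mxE big_ord1 !mxE mulr1 /=.
  by rewrite andbT.
have F2 : G *m L = 1%:M - one *m ev^T.
  rewrite -[G]GT -[L]LT -trmx_mul F1.
  by rewrite linearB /= trmx1 trmx_mul trmxK.
have F3 : one^T *m L = 0.
  apply/matrixP => i j; rewrite [RHS]mxE.
  transitivity (\sum_k laplacian W k j); last exact: lap_colsum.
  by rewrite mxE; apply: eq_bigr => k _; rewrite [one^T i k]mxE [one k i]mxE mul1r.
have F3' : L *m one = 0.
  by rewrite -[L]LT -[one]trmxK -trmx_mul F3 trmx0.
have F4 : ev^T *m G = 0.
  by rewrite trmx_delta -rowE; apply/matrixP => i j; rewrite !mxE Gv.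
have F4' : G *m ev = 0.
  by rewrite -[G]GT -[ev]trmxK -trmx_mul F4 trmx0.
have F5 : one^T *m one = (n%:R : R)%:M.
  apply/matrixP => i j; rewrite (ord1 i) (ord1 j) !mxE /=.
  rewrite (eq_bigr (fun _ => 1)); last by move=> k _; rewrite !mxE mulr1.
  by rewrite sumr_const card_ord mulr1n.
have nz : (n%:R : R) != 0.
  by rewrite pnatr_eq0 -lt0n; apply: (leq_ltn_trans (leq0n v)); apply: ltn_ord.
pose P := 1%:M - (n%:R^-1 : R) *: (one *m one^T).
have P1 : one^T *m P = 0.
  rewrite mulmxBr mulmx1 -scalemxAr mulmxA F5 mul_scalar_mx scalerA mulVf //.
  by rewrite scale1r subrr.
have P2 : P *m one = 0.
  rewrite mulmxBl mul1mx -scalemxAl -mulmxA F5 mul_mx_scalar scalerA mulVf //.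
  by rewrite scale1r subrr.
have PT : P^T = P.
  by rewrite /P linearB /= trmx1 linearZ /= trmx_mul trmxK.
have LP : L *m P = L.
  by rewrite mulmxBr mulmx1 -scalemxAr mulmxA F3' mul0mx scaler0 subr0.
have PL : P *m L = L.
  by rewrite mulmxBl mul1mx -scalemxAl -mulmxA F3 mulmx0 scaler0 subr0.
clearbody P.
have LY : L *m (P *m G *m P) = P.
  by rewrite mulmxA mulmxA LP F1 mulmxBl mul1mx -mulmxA P1 mulmx0 subr0.
have YL : P *m G *m P *m L = P.
  by rewrite -!mulmxA PL F2 mulmxBr mulmx1 mulmxA P2 mul0mx subr0.
have MP : is_MP_pinv L (P *m G *m P).
  split.
  - by rewrite mulmxA mulmxA LP -mulmxA PL F1 mulmxBl mul1mx -mulmxA F3 mulmx0 subr0.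
  - rewrite -!mulmxA (mulmxA L P) LP (mulmxA P L) PL (mulmxA G L) F2.
    by rewrite mulmxBl mul1mx -(mulmxA one) (mulmxA ev^T) F4 mul0mx mulmx0 subr0.
  - by rewrite LY.
  - by rewrite YL.
have MPZ : is_MP_pinv L (mp_pinv L).
  by apply: epsilon_spec; exists (P *m G *m P).
case: MPZ => LZL _ _ _.
rewrite /node_resistance /mxtrace; apply: eq_bigr => u _.
pose y : 'cV[R]_n := \col_k G k u.
have by_ : bvec R u v = L *m y.
  apply/matrixP => i j; rewrite (ord1 j) [LHS]mxE.
  transitivity ((L *m G) i u); first by rewrite LG.
  by rewrite !mxE; apply: eq_bigr => k _; rewrite !mxE.
rewrite /resistance by_ trmx_mul LT.
have -> : y^T *m L *m mp_pinv L *m (L *m y) = y^T *m (L *m mp_pinv L *m L) *m y.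
  by rewrite !mulmxA.
rewrite LZL -mulmxA -by_ mxE.
rewrite (eq_bigr (fun k => G k u * ((k == u)%:R - (k == v)%:R))); last first.
  by move=> k _; rewrite !mxE.
rewrite (bigD1 u) //= big1 ?addr0.
  rewrite eqxx; case: (eqVneq u v) => [->|uv]; first by rewrite Gv subrr mulr0.
  by rewrite subr0 mulr1.
move=> k ku; rewrite (negbTE ku); case: (eqVneq k v) => [->|kv].
  by rewrite Gv mul0r.
by rewrite subrr mulr0.
Qed.


Lemma sum_deltal (i : 'I_n) (F : 'I_n -> R) : \sum_k (i == k)%:R * F k = F i.
Proof.
rewrite (bigD1 i) //= eqxx mul1r big1 ?addr0 // => k /negbTE.
by rewrite eq_sym => ->; rewrite mul0r.
Qed.

Lemma sum_deltar (i : 'I_n) (F : 'I_n -> R) : \sum_k F k * (k == i)%:R = F i.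
Proof.
rewrite (bigD1 i) //= eqxx mulr1 big1 ?addr0 // => k /negbTE ->; exact: mulr0.
Qed.

Lemma gr_sym_aux W v G : W^T = W -> (forall u, G v u = 0) ->
  (forall i u, (laplacian W *m G) i u = (i == u)%:R - (i == v)%:R) ->
  forall i j, G i j = G j i.
Proof.
move=> WT Gv LG u j.
have E1 : \sum_i G i j * (laplacian W *m G) i u = G u j.
  under eq_bigr => i _ do rewrite LG mulrBr.
  by rewrite sumrB sum_deltar sum_deltar Gv subr0.
have E2 : \sum_i G i u * (laplacian W *m G) i j = G j u.
  under eq_bigr => i _ do rewrite LG mulrBr.
  by rewrite sumrB sum_deltar sum_deltar Gv subr0.
rewrite -E1 -E2.
under eq_bigr => i _ do rewrite mxE mulr_sumr.
rewrite exchange_big /=; apply: eq_bigr => k _.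
rewrite mxE mulr_sumr; apply: eq_bigr => i _.
by rewrite (lap_sym WT i k); ring.
Qed.


Lemma mulE (A B : 'M[R]_n) i j : (A *m B) i j = \sum_k A i k * B k j.
Proof. by rewrite mxE. Qed.

Lemma subE (A B : 'M[R]_n) i j : (A - B) i j = A i j - B i j.
Proof. by rewrite !mxE. Qed.

Lemma gr_exists W v : W^T = W -> (forall i j, 0 <= W i j) ->
  (forall i, connect (edge_rel W) i v) -> exists G, grounded W v G.
Proof.
move=> WT W0 conn.
set L := laplacian W.
pose N : 'M[R]_n := \matrix_(i, j) (if (i == v) || (j == v) then (i == j)%:R
                                    else L i j).
have Nunit : N \in unitmx.
  rewrite unitmxE unitfE; apply/negP => /det0P [x xnz xN].
  move/negP: xnz; apply; apply/eqP/matrixP => z a; rewrite (ord1 z) mxE.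
  have Ha : forall a, \sum_k x 0 k * N k a = 0.
    by move=> b; move/matrixP: xN => /(_ 0 b); rewrite !mxE.
  have yv : x 0 v = 0.
    rewrite -(Ha v); under eq_bigr => k _ do rewrite mxE eqxx orbT.
    by rewrite sum_deltar.
  pose Y : 'M[R]_n := \matrix_(i, j) x 0 i.
  have HL : forall b, b != v -> (laplacian W *m Y) b b = 0.
    move=> b bv; rewrite -(Ha b) mxE; apply: eq_bigr => k _.
    rewrite [Y k b]mxE [N k b]mxE (negbTE bv) orbF; case: (eqVneq k v) => [->|kv].
      by rewrite yv mulr0 mul0r.
    by rewrite (lap_sym WT b k) mulrC.
  have HL' : forall b, b != v -> \sum_k W b k * (x 0 b - x 0 k) = 0.
    move=> b bv; transitivity ((laplacian W *m Y) b b); last exact: HL b bv.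
    by rewrite lapM; apply: eq_bigr => k _; rewrite !mxE.
  have P1 := @minpr W v (pred1 v) (fun i => x 0 i) W0 conn (eqxx v).
  have P2 := @minpr W v (pred1 v) (fun i => - x 0 i) W0 conn (eqxx v).
  apply/eqP; rewrite eq_le; apply/andP; split.
    rewrite -oppr_ge0; apply: P2.
      by move=> b /eqP ->; rewrite yv oppr0.
    move=> b bv; rewrite (eq_bigr (fun k => - (W b k * (x 0 b - x 0 k)))).
      by rewrite sumrN oppr_ge0 (HL' b bv).
    by move=> k _; rewrite -mulrN; congr (_ * _); ring.
  apply: P1.
    by move=> b /eqP ->; rewrite yv.
  by move=> b bv; rewrite (HL' b bv).
pose X := invmx N.
have NX : N *m X = 1%:M by apply: mulmxV.
have NE : forall i k, i != v -> k != v -> N i k = L i k.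
  by move=> i k iv kv; rewrite mxE (negbTE iv) (negbTE kv).
have Nv : forall i k, i == v -> N i k = (i == k)%:R.
  by move=> i k iv; rewrite mxE iv.
have Nv' : forall i k, k == v -> N i k = (i == k)%:R.
  by move=> i k kv; rewrite mxE kv orbT.
have Xv : forall u, X v u = (v == u)%:R.
  move=> u; have H := congr1 (fun M : 'M[R]_n => M v u) NX.
  rewrite /= mulE [1%:M v u]mxE in H; rewrite -H -(sum_deltal v (fun k => X k u)).
  by apply: eq_bigr => k _; rewrite Nv.
pose G := X - delta_mx v v.
have Gv : forall u, G v u = 0.
  by move=> u; rewrite !mxE Xv eqxx /= eq_sym subrr.
have NG : forall i u, i != v -> (N *m G) i u = (i == u)%:R.
  move=> i u iv; rewrite mulmxBr NX subE [1%:M i u]mxE mulE.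
  rewrite (eq_bigr (fun k => N i k * (k == v)%:R * (u == v)%:R)); last first.
    by move=> k _; rewrite [delta_mx _ _ _ _]mxE -mulrA -natrM mulnb.
  rewrite -mulr_suml sum_deltar (Nv' i v (eqxx v)) (negbTE iv) mul0r subr0 //.
have LGi : forall i u, i != v -> (laplacian W *m G) i u = (i == u)%:R.
  move=> i u iv; rewrite -(NG i u iv) !mulE; apply: eq_bigr => k _.
  case: (eqVneq k v) => [->|kv]; first by rewrite Gv !mulr0.
  by rewrite NE.
have LGs : forall u, \sum_i (laplacian W *m G) i u = 0.
  move=> u; under eq_bigr => i _ do rewrite mulE.
  rewrite exchange_big /=; apply: big1 => k _.
  by rewrite -mulr_suml lap_colsum // mul0r.
have LG : forall i u, (laplacian W *m G) i u = (i == u)%:R - (i == v)%:R.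
  move=> i u; case: (eqVneq i v) => [->|iv]; last by rewrite LGi // subr0.
  have := LGs u; rewrite (bigD1 v) //= => /eqP; rewrite addr_eq0 => /eqP ->.
  rewrite (eq_bigr (fun j => (j == u)%:R)); last by move=> j jv; rewrite LGi.
  case: (eqVneq u v) => [->|uv].
    by rewrite big1 ?oppr0 ?subrr // => j /negbTE ->.
  rewrite (bigD1 u) //= eqxx big1 ?addr0; last first.
    by move=> j /andP[_ /negbTE ->].
  by rewrite sub0r.
exists G; split => //.
exact: (gr_sym_aux WT Gv LG).
Qed.

Lemma final (ce cj Gee Gjj b p q r : R) :
 0 < ce -> 0 < cj -> 0 <= Gee -> 0 <= Gjj -> 0 <= b -> b * b <= Gee * Gjj ->
 ce * b * p <= q * (1 + ce * Gee) -> cj * b * r <= q * (1 + cj * Gjj) ->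
 ce / (1 + ce * (Gee - cj / (1 + cj * Gjj) * b * b)) *
   (p - 2 * (cj / (1 + cj * Gjj)) * b * q + (cj / (1 + cj * Gjj)) ^+ 2 * b ^+ 2 * r)
 <= ce / (1 + ce * Gee) * p.
Proof.
move=> ce0 cj0 Ge Gj b0 bb H1 H2.
set A := 1 + ce * Gee. set D := 1 + cj * Gjj.
have A0 : 0 < A by rewrite /A; nra.
have D0 : 0 < D by rewrite /D; nra.
set K := A * D - ce * cj * b ^+ 2.
have K0 : 0 < K.
  have h1 : 0 <= ce * cj * (Gee * Gjj - b * b).
    by apply: mulr_ge0; [apply: mulr_ge0; apply: ltW | rewrite subr_ge0].
  have h2 : 0 <= ce * Gee by apply: mulr_ge0 => //; apply: ltW.
  have h3 : 0 <= cj * Gjj by apply: mulr_ge0 => //; apply: ltW.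
  have -> : K = 1 + ce * Gee + cj * Gjj + ce * cj * (Gee * Gjj - b * b).
    by rewrite /K /A /D; ring.
  lra.
have E : 1 + ce * (Gee - cj / D * b * b) = K / D.
  rewrite /K /A; field; lra.
rewrite E -subr_ge0.
have -> : ce / (1 + ce * Gee) * p -
   ce / (K / D) * (p - 2 * (cj / D) * b * q + (cj / D) ^+ 2 * b ^+ 2 * r)
  = ce * cj * b * (D * (A * q - ce * b * p) + A * (D * q - cj * b * r)) / (A * D * K).
  rewrite /K /A /D; field.
  by apply/and3P; split; [exact: lt0r_neq0 K0 | exact: lt0r_neq0 D0 | exact: lt0r_neq0 A0].
apply: divr_ge0; last by apply: ltW; rewrite !mulr_gt0.
apply: mulr_ge0; first by rewrite !mulr_ge0 // ltW.
apply: addr_ge0; apply: mulr_ge0; try exact: ltW; rewrite subr_ge0; [rewrite (mulrC A) | rewrite (mulrC D)]; by [].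
Qed.

Lemma addedge_sym W v e c : W^T = W -> (addedge W v e c)^T = addedge W v e c.
Proof.
move=> WT; apply/matrixP => i j; rewrite !mxE.
have -> : W j i = W i j by rewrite -{1}WT mxE.
by rewrite -addrA (addrC (if _ then _ else _)) addrA.
Qed.

Lemma addedge_nonneg W v e c : 0 <= c -> (forall i j, 0 <= W i j) ->
  forall i j, 0 <= addedge W v e c i j.
Proof.
move=> c0 W0 i j; rewrite mxE; apply: addr_ge0; first apply: addr_ge0 => //.
  by case: ifP.
by case: ifP.
Qed.

Lemma addedge_conn W v e c : 0 <= c -> (forall i j, 0 <= W i j) ->
  forall a b, connect (edge_rel W) a b -> connect (edge_rel (addedge W v e c)) a b.
Proof.
move=> c0 W0; apply: connect_sub => x y exy; apply: connect1.
move: exy; rewrite /edge_rel mxE => h; apply: (lt_le_trans h).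
rewrite -addrA lerDl; apply: addr_ge0; by case: ifP.
Qed.

Lemma core W v e j ce cj : W^T = W -> (forall i k, 0 <= W i k) ->
  (forall i, connect (edge_rel W) i v) -> 0 < ce -> 0 < cj ->
  node_resistance (addedge W v j cj) v
    - node_resistance (addedge (addedge W v j cj) v e ce) v
  <= node_resistance W v - node_resistance (addedge W v e ce) v.
Proof.
move=> WT W0 conn ce0 cj0.
have [G gr] := gr_exists WT W0 conn.
have G0 := gr_nonneg W0 conn gr.
have pp := gr_pp W0 conn gr.
have [Gv Gs LG] := gr.
have nze : 1 + ce * G e e != 0.
  by apply: lt0r_neq0; apply: ltr_pwDl => //; apply: mulr_ge0 => //; apply: ltW.
have nzj : 1 + cj * G j j != 0.
  by apply: lt0r_neq0; apply: ltr_pwDl => //; apply: mulr_ge0 => //; apply: ltW.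
have grj := gr_upd nzj gr.
have Wj0 := addedge_nonneg v j (ltW cj0) W0.
have connj : forall i, connect (edge_rel (addedge W v j cj)) i v.
  by move=> i; apply: addedge_conn => //; apply: ltW.
have Gj0 := gr_nonneg Wj0 connj grj.
have nzje : 1 + ce * upd G j cj e e != 0.
  by apply: lt0r_neq0; apply: ltr_pwDl => //; apply: mulr_ge0 => //; apply: ltW.
have WjT := addedge_sym v j cj WT.
rewrite (res_formula WT gr) (res_formula (addedge_sym v e ce WT) (gr_upd nze gr)).
rewrite (res_formula WjT grj) (res_formula (addedge_sym v e ce WjT) (gr_upd nzje grj)).
have sK : forall a b : R, a - (a - b) = b by move=> a b; ring.
rewrite !tr_upd !sK.
set b := G e j.
set kj := cj / (1 + cj * G j j).
have Eje : upd G j cj e e = G e e - kj * b * b.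
  by rewrite mxE (Gs j e).
have ES : \sum_i G i e * G e i = \sum_i G i e * G i e.
  by apply: eq_bigr => i _; rewrite (Gs e i).
have ES' : \sum_i upd G j cj i e * upd G j cj e i =
   \sum_i G i e * G i e - 2 * kj * b * (\sum_i G i e * G i j)
   + kj ^+ 2 * b ^+ 2 * (\sum_i G i j * G i j).
  rewrite !mulr_sumr -sumrB -big_split /=; apply: eq_bigr => i _.
  rewrite !mxE -/kj (Gs e i) (Gs j i) (Gs j e) -/b; ring.
rewrite Eje ES ES'.
apply: final => //.
- exact: (G0 e j).
- by move: (pp j e j); rewrite (Gs j e) [G j j * _]mulrC.
- rewrite !mulr_sumr mulr_suml; apply: ler_sum => i _.
  have h1 := pp i e j. have gi := G0 i e. have hi := G0 i j.
  have cg : 0 <= ce * G i e by apply: mulr_ge0 => //; apply: ltW.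
  have h2 := ler_wpM2l cg h1.
  have h3 : 0 <= G i e * G i j by apply: mulr_ge0.
  apply: (le_trans (y := ce * G i e * (G i j * G e e))).
    by apply: le_trans h2; rewrite le_eqVlt; apply/orP; left; apply/eqP; rewrite /b; ring.
  rewrite mulrDr mulr1 -subr_ge0.
  have -> : G i e * G i j + G i e * G i j * (ce * G e e) - ce * G i e * (G i j * G e e)
     = G i e * G i j by ring.
  exact: h3.
- rewrite !mulr_sumr mulr_suml; apply: ler_sum => i _.
  have h1 := pp i j e. have gi := G0 i e. have hi := G0 i j.
  rewrite (Gs j e) in h1.
  have cg : 0 <= cj * G i j by apply: mulr_ge0 => //; apply: ltW.
  have h2 := ler_wpM2l cg h1.
  have h3 : 0 <= G i e * G i j by apply: mulr_ge0.
  apply: (le_trans (y := cj * G i j * (G i e * G j j))).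
    by apply: le_trans h2; rewrite le_eqVlt; apply/orP; left; apply/eqP; rewrite /b; ring.
  rewrite mulrDr mulr1 -subr_ge0.
  have -> : G i e * G i j + G i e * G i j * (cj * G j j) - cj * G i j * (G i e * G j j)
     = G i e * G i j by ring.
  exact: h3.
Qed.


Lemma augment_add (A : 'M[R]_n) v c (S : {set 'I_n}) j : j \notin S ->
  augment A v c (j |: S) = addedge (augment A v c S) v j (c j).
Proof.
move=> jS; apply/matrixP => i k; rewrite !mxE !in_setU1.
have key : forall (b : bool) (x : 'I_n) (z : R), (if b && ((x == j) || (x \in S)) then z else 0)
   = (if b && (x \in S) then z else 0) + (if b && (x == j) then z else 0).
  move=> b x z; case: b => //=; last by rewrite addr0.
  case: (eqVneq x j) => [->|xj] /=; first by rewrite (negbTE jS) add0r.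
  by rewrite addr0.
rewrite !key.
have -> : (if (i == v) && (k == j) then c k else 0) = (if (i == v) && (k == j) then c j else 0).
  by case: (eqVneq k j) => [->|]; rewrite ?andbF.
have -> : (if (k == v) && (i == j) then c i else 0) = (if (k == v) && (i == j) then c j else 0).
  by case: (eqVneq i j) => [->|]; rewrite ?andbF.
ring.
Qed.

Lemma augment_valid (A : 'M[R]_n) v (Ev : {set 'I_n}) c (S : {set 'I_n}) :
  A^T = A -> (forall i j, 0 <= A i j) -> connected_graph A ->
  (forall u, u \in Ev -> [/\ u != v, A u v = 0 & 0 < c u]) -> S \subset Ev ->
  [/\ (augment A v c S)^T = augment A v c S,
      forall i j, 0 <= augment A v c S i j &
      forall i, connect (edge_rel (augment A v c S)) i v].
Proof.
move=> AT A0 conn hEv SE.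
have cS : forall u, u \in S -> 0 <= c u.
  by move=> u uS; have [_ _ /ltW] := hEv u (subsetP SE u uS).
have nn : forall i j, 0 <= augment A v c S i j.
  move=> i j; rewrite mxE; apply: addr_ge0; first apply: addr_ge0 => //.
    by case: ifP => // /andP[_ /cS].
  by case: ifP => // /andP[_ /cS].
split => //.
- apply/matrixP => i j; rewrite !mxE.
  have -> : A j i = A i j by rewrite -{1}AT mxE.
  by rewrite -addrA (addrC (if _ then _ else _)) addrA.
move=> i; move: (conn i v); apply: connect_sub => x y exy; apply: connect1.
move: exy; rewrite /edge_rel mxE => h; apply: (lt_le_trans h).
rewrite -addrA lerDl; apply: addr_ge0.
  by case: ifP => // /andP[_ /cS].
by case: ifP => // /andP[_ /cS].
Qed.

End Core.

Theorem theorem2 (R : realFieldType) (n : nat) (A : 'M[R]_n) (v : 'I_n)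
  (Ev : {set 'I_n}) (c : 'I_n -> R) (S T : {set 'I_n}) (e : 'I_n) :
  A^T = A ->
  (forall i, A i i = 0) ->
  (forall i j, 0 <= A i j) ->
  connected_graph A ->
  (forall u, u \in Ev -> [/\ u != v, A u v = 0 & 0 < c u]) ->
  S \subset T -> T \subset Ev -> e \in Ev :\: T ->
  node_resistance (augment A v c T) v - node_resistance (augment A v c (e |: T)) v
  <= node_resistance (augment A v c S) v - node_resistance (augment A v c (e |: S)) v.
Proof.
move=> AT Adiag A0 conn hEv ST TE.
rewrite in_setD => /andP[eT eEv].
have [_ _ ce0] := hEv e eEv.
move: {2}#|T :\: S| (erefl #|T :\: S|) => k.
elim: k S ST => [|k IH] S ST hk.
  have : T :\: S = set0 by apply: cards0_eq.
  move/eqP; rewrite setD_eq0 => TS.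
  by have -> : S = T by apply/eqP; rewrite eqEsubset ST TS.
have : (0 < #|T :\: S|)%N by rewrite hk.
rewrite card_gt0 => /set0Pn [j]; rewrite in_setD => /andP[jS jT].
have SE : S \subset Ev := subset_trans ST TE.
have [WT W0 Wc] := augment_valid AT A0 conn hEv SE.
have [_ _ cj0] := hEv j (subsetP TE j jT).
have eS : e \notin S by apply/negP => /(subsetP ST); rewrite (negbTE eT).
have ej : e != j by apply/negP => /eqP ej; move: eT; rewrite ej jT.
have eS' : e \notin j |: S by rewrite in_setU1 negb_or ej eS.
apply: (le_trans (IH (j |: S) _ _)).
- by rewrite subUset sub1set jT ST.
- apply/eqP; rewrite -eqSS -hk (cardsD1 j (T :\: S)) in_setD jS jT /=.
  by rewrite add1n eqSS setDDl setUC.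
rewrite (augment_add _ _ _ eS') (augment_add _ _ _ jS) (augment_add _ _ _ eS).
exact: core.
Qed.
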